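(* Let $T$ be a light tournament and $z\in V(T)$. Then $V_3(z)$ is 2-in-dominated by $V_2(z)$: there is a set $Z'\subseteq V_2(z)$ with $|Z'|\le 2$ such that every $s\in V_3(z)$ has an arc $(s,z')\in A(T)$ for some $z'\in Z'$.
   Context: A triangle of a tournament is a set of three vertices inducing a directed 3-cycle. An unordered pair $ab$ of vertices is a diagonal if there exist vertices $u,v$ with $\{u,v,a\}$ and $\{u,v,b\}$ both triangles. A triangle is heavy if at least two of its pairs are diagonals; a tournament is light if it has no heavy triangle. For $S\subseteq V(T)$, $N(S)=\{v\notin S: (v,u)\in A(T)\text{ for some }u\in S\}$. For $z\in V(T)$: $V_1(z)=\{z\}$ and $V_{j+1}(z)=N\big(\bigcup_{k\le j}V_k(z)\big)$ for $j\ge1$. *)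

(* Defs.v *)
From mathcomp Require Import all_boot.
Set Implicit Arguments. Unset Strict Implicit. Unset Printing Implicit Defensive.

Section Tournaments.
Variable T : finType.
Variable adj : rel T.  (* adj u v  <=>  (u,v) is an arc, u -> v *)

Definition tournament : Prop :=
  (forall x, ~~ adj x x) /\ (forall x y, x != y -> adj x y = ~~ adj y x).

Definition triangle (a b c : T) : bool :=
  [&& adj a b, adj b c & adj c a] || [&& adj a c, adj c b & adj b a].

Definition diagonal (a b : T) : bool :=
  (a != b) && [exists u, exists v, triangle u v a && triangle u v b].

Definition heavy (a b c : T) : bool :=
  triangle a b c &&
  [|| diagonal a b && diagonal b c, diagonal b c && diagonal a c
    | diagonal a b && diagonal a c].

Definition light : Prop := forall a b c, ~~ heavy a b c.

Definition Nbr (S : {set T}) : {set T} :=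
  [set v | (v \notin S) && [exists u in S, adj v u]].

(* cum z n = V_1(z) ∪ ... ∪ V_{n+1}(z) *)
Fixpoint cum (z : T) (n : nat) : {set T} :=
  match n with
  | 0 => [set z]
  | n'.+1 => cum z n' :|: Nbr (cum z n')
  end.

(* V_j(z); V_0 is unused (set to empty). *)
Definition Vl (z : T) (j : nat) : {set T} :=
  match j with
  | 0 => set0
  | 1 => [set z]
  | j'.+2 => Nbr (cum z j')
  end.
End Tournaments.

(* Main.v *)
Require Import Defs.
From mathcomp Require Import all_boot.

Lemma king_lem (T : finType) (adj : rel T) : tournament adj ->
  forall (X : {set T}) x0, x0 \in X -> exists2 k, k \in X &
    forall x, x \in X -> x != k ->
      adj x k \/ exists2 w, w \in X & adj x w && adj w k.
Proof.
move=> [irr asym] X x0 Hx0.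
case: (arg_maxnP (fun k => #|[set w in X | adj w k]|) Hx0) => k Hk Hmax.
exists k => // x Hx Hxk.
case Hxk': (adj x k); first by left.
right.
case: (boolP [exists w in X, adj x w && adj w k]).
  by move=> /existsP [w /andP [Hw Hw']]; exists w.
move=> Hno; exfalso.
have Hp : [set w in X | adj w k] \proper [set w in X | adj w x].
  apply/properP; split.
    apply/subsetP => w; rewrite !inE => /andP [Hw Hwk].
    rewrite Hw /=.
    have Hwx : w != x by apply/eqP => E; rewrite E Hxk' in Hwk.
    rewrite (asym _ _ Hwx).
    apply/negP => Hxw; apply: (negP (Hno)); apply/existsP; exists w.
    by rewrite Hw Hxw Hwk.
  exists k; rewrite !inE; last by rewrite (negbTE (irr k)) andbF.
  apply/andP; split=> //.
  by rewrite (asym k x) ?Hxk' // eq_sym.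
have H1 := Hmax x Hx; have H2 := proper_card Hp; rewrite /= in H1.
by rewrite ltnNge H1 in H2.
Qed.

Lemma tri_diag (T : finType) (adj : rel T) (u v a b : T) :
  a != b -> triangle adj u v a -> triangle adj u v b -> diagonal adj a b.
Proof.
move=> Hab H1 H2; rewrite /diagonal Hab /=.
by apply/existsP; exists u; apply/existsP; exists v; rewrite H1 H2.
Qed.

Theorem lemma5 (T : finType) (adj : rel T) :
  tournament adj -> light adj ->
  forall z : T, exists Z' : {set T},
    [/\ Z' \subset Vl adj z 2, #|Z'| <= 2 &
        forall s, s \in Vl adj z 3 -> exists2 z', z' \in Z' & adj s z'].
Proof.
move=> Htour Hlight z.
have [irr asym] := Htour.
have neq_of : forall a b, adj a b -> a != b.
  by move=> a b Hab; apply/eqP => E; rewrite E (negbTE (irr _)) in Hab.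
have nadj : forall a b, adj a b -> ~~ adj b a.
  by move=> a b Hab; rewrite -(asym _ _ (neq_of _ _ Hab)).
have tot : forall a b, a != b -> ~~ adj a b -> adj b a.
  by move=> a b Hab H; rewrite (asym b a) ?H // eq_sym.
have V2E : forall y, (y \in Vl adj z 2) = adj y z.
  move=> y; rewrite /Vl /= /Nbr inE in_set1.
  case Hyz: (adj y z).
    rewrite (neq_of _ _ Hyz) /=; apply/existsP; exists z; by rewrite !inE eqxx Hyz.
  apply/negbTE; apply/negP => /andP [_ /existsP [u /andP [Hu Hyu]]].
  by move: Hu; rewrite in_set1 => /eqP E; rewrite E Hyz in Hyu.
have V3E : forall s, s \in Vl adj z 3 -> adj z s /\ exists2 y, adj y z & adj s y.
  move=> s; rewrite /Vl /= /Nbr inE => /andP [Hn /existsP [u /andP [Hu Hsu]]].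
  rewrite !inE negb_or in Hn; case/andP: Hn => Hsz Hn.
  have Hnsz : ~~ adj s z.
    rewrite Hsz /= in Hn; apply: contra Hn => H; apply/existsP; exists z.
    by rewrite !inE eqxx H.
  split; first by apply: tot.
  move: Hu; rewrite !inE; case/orP.
    by move/eqP => E; rewrite E in Hsu; rewrite Hsu in Hnsz.
  case/andP => _ /existsP [w /andP [Hw Hu]].
  move: Hw; rewrite in_set1 => /eqP E; rewrite E in Hu.
  by exists u.
have noboth : forall s y, adj z s -> adj s y -> adj y z ->
    ~~ (diagonal adj z s && diagonal adj z y).
  move=> s y Hzs Hsy Hyz; apply/negP => /andP [D1 D2].
  apply: (negP (Hlight z s y)).
  by rewrite /heavy /triangle Hzs Hsy Hyz D1 D2 /= !orbT.
have factA : forall s s' y, adj z s -> ~~ diagonal adj z s -> adj s s' ->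
    adj z s' -> adj s' y -> adj y z -> adj s y.
  move=> s s' y Hzs Hd Hss' Hzs' Hs'y Hyz.
  apply/negPn/negP => Hn.
  have Hys : adj y s.
    apply: tot Hn; apply/eqP => E; rewrite E in Hzs; by rewrite (negbTE (nadj _ _ Hzs)) in Hyz.
  apply: (negP (Hd)).
  apply: (@tri_diag T adj s' y).
  - exact: neq_of Hzs.
  - by rewrite /triangle Hs'y Hyz Hzs'.
  - by rewrite /triangle Hs'y Hys Hss'.
have factB : forall y y' s, adj y z -> ~~ diagonal adj z y -> adj y' y ->
    adj y' z -> adj z s -> adj s y' -> adj s y.
  move=> y y' s Hyz Hd Hy'y Hy'z Hzs Hsy'.
  apply/negPn/negP => Hn.
  have Hys : adj y s.
    apply: tot Hn; apply/eqP => E; rewrite E in Hzs; by rewrite (negbTE (nadj _ _ Hzs)) in Hyz.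
  apply: (negP (Hd)).
  apply: (@tri_diag T adj s y').
  - by rewrite eq_sym; apply: neq_of.
  - by rewrite /triangle Hsy' Hy'z Hzs.
  - by rewrite /triangle Hsy' Hy'y Hys.
pose S := [set s | adj z s && [exists y, adj y z && adj s y]].
pose S1 := [set s in S | ~~ diagonal adj z s].
pose Y2 := [set y | adj y z && ~~ diagonal adj z y].
have C1 : exists A : {set T}, [/\ A \subset Vl adj z 2, #|A| <= 1 &
    forall s, s \in S1 -> exists2 z', z' \in A & adj s z'].
  case: (set_0Vmem S1) => [E | [x0 Hx0]].
    by exists set0; split; rewrite ?sub0set ?cards0 // E => s; rewrite inE.
  have [k Hk Hking] := @king_lem T adj Htour _ _ Hx0.
  move: (Hk); rewrite !inE => /andP [/andP [Hzk /existsP [y1 /andP [Hy1z Hky1]]] Hdk].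
  exists [set y1]; split; rewrite ?cards1 //.
    by rewrite sub1set V2E.
  move=> s Hs; exists y1; first by rewrite in_set1.
  case: (eqVneq s k) => [-> // | Hsk].
  move: (Hs); rewrite !inE => /andP [/andP [Hzs _] Hds].
  case: (Hking s Hs Hsk) => [Hsk' | [w Hw /andP [Hsw Hwk]]].
    exact: (factA s k y1 Hzs Hds Hsk' Hzk Hky1 Hy1z).
  move: (Hw); rewrite !inE => /andP [/andP [Hzw _] Hdw].
  have Hwy1 := factA w k y1 Hzw Hdw Hwk Hzk Hky1 Hy1z.
  exact: (factA s w y1 Hzs Hds Hsw Hzw Hwy1 Hy1z).
have C2 : exists A : {set T}, [/\ A \subset Vl adj z 2, #|A| <= 1 &
    forall s, s \in S -> diagonal adj z s -> exists2 z', z' \in A & adj s z'].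
  case: (set_0Vmem Y2) => [E | [x0 Hx0]].
    exists set0; split; rewrite ?sub0set ?cards0 // => s; rewrite inE.
    case/andP => Hzs /existsP [y /andP [Hyz Hsy]] Hds; exfalso.
    have := noboth s y Hzs Hsy Hyz; rewrite Hds /= => Hdy.
    have : y \in Y2 by rewrite inE Hyz Hdy.
    by rewrite E inE.
  have [k Hk Hking] := @king_lem T adj Htour _ _ Hx0.
  move: (Hk); rewrite !inE => /andP [Hkz Hdk].
  exists [set k]; split; rewrite ?cards1 //.
    by rewrite sub1set V2E.
  move=> s; rewrite inE => /andP [Hzs /existsP [y /andP [Hyz Hsy]]] Hds.
  exists k; first by rewrite in_set1.
  have := noboth s y Hzs Hsy Hyz; rewrite Hds /= => Hdy.
  have Hy : y \in Y2 by rewrite inE Hyz Hdy.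
  case: (eqVneq y k) => [<- // | Hyk].
  case: (Hking y Hy Hyk) => [Hyk' | [w Hw /andP [Hyw Hwk]]].
    exact: (factB k y s Hkz Hdk Hyk' Hyz Hzs Hsy).
  move: (Hw); rewrite !inE => /andP [Hwz Hdw].
  have Hsw := factB w y s Hwz Hdw Hyw Hyz Hzs Hsy.
  exact: (factB k w s Hkz Hdk Hwk Hwz Hzs Hsw).
have [A1 [HA1 cA1 cov1]] := C1.
have [A2 [HA2 cA2 cov2]] := C2.
exists (A1 :|: A2); split.
- by rewrite subUset HA1 HA2.
- rewrite cardsU; apply: leq_trans (leq_subr _ _) _.
  by rewrite -[2]/(1 + 1); apply: leq_add.
- move=> s Hs; have [Hzs [y Hyz Hsy]] := V3E s Hs.
  have HsS : s \in S by rewrite inE Hzs; apply/existsP; exists y; rewrite Hyz Hsy.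
  case Hds: (diagonal adj z s).
    by have [z' Hz' Hsz'] := cov2 s HsS Hds; exists z'; rewrite // inE Hz' orbT.
  have HsS1 : s \in S1 by rewrite inE HsS Hds.
  by have [z' Hz' Hsz'] := cov1 s HsS1; exists z'; rewrite // inE Hz'.
Qed.
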